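(* Let $\mu,\nu,d$ be integers ($d\ge1$) and $M$ an integer with $q^{\mu-1}\le M<q^\mu$. Let $\kappa_d$ be an integer with $1\le\kappa_d\le\frac23(\mu+\nu)$ and $q^{\kappa_d-1}<M^2/d^2\le q^{\kappa_d}$. Let $\rho_1$ be an integer with $0\le\rho_1\le\mu+\nu-\kappa_d$, let $\vartheta'\in\mathbb{R}$, and let $l\ge0$ be an integer. For $0\le u<q^{\kappa_d}$ and $0\le h<q^{\rho_1}$ put $$c_{\kappa_d,\rho_1,l}(u,h)=\frac{1}{q^{\rho_1}}\sum_{0\le w<q^{\rho_1}}f_P^{(\kappa_d+\rho_1)}\big(u+wq^{\kappa_d}+q^{\kappa_d+\rho_1}\lfloor q^l/q^{\rho_1}\rfloor\big)\,\overline{f_P^{(\kappa_d+\rho_1)}\big(wq^{\kappa_d}+q^{\kappa_d+\rho_1}\lfloor q^l/q^{\rho_1}\rfloor\big)}\,e\Big(-\frac{hw}{q^{\rho_1}}\Big),$$ and $$S(M,d,l)=\sum_{0\le h<q^{\rho_1}}\ \sum_{\frac{M}{qd}\le m'<\frac Md}\frac1{m'}\sum_{\substack{0\le k'<m'\\ \gcd(k',m')=1}}\Big|\sum_{0\le u<q^{\kappa_d}}c_{\kappa_d,\rho_1,l}(u,h)\,e\Big(-\frac{u\vartheta'}{q^{\mu+\nu}}+\frac{uk'}{m'}\Big)\Big|.$$ Then $|S(M,d,l)|\ll(\log q)\,q^{\rho_1/2+\kappa_d}$.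
   Context: Fix an integer $q\ge2$. For an integer $n\ge0$, $\varepsilon_i(n)$ is the $i$-th digit of $n$ in base $q$ ($\varepsilon_0$ the units digit). For real $x>0$, $T_q(x)=\lfloor\log x/\log q\rfloor$. $e(x)=\exp(2\pi i x)$. $P:\mathbb{N}\to\mathbb{N}$ is a nondecreasing integer-valued function. For integers $x,y\ge0$, $a_P(x,y)=\sum_{i\ge0}\varepsilon_{i+P(y)}(x)\cdots\varepsilon_i(x)$. Fix $\alpha\in\mathbb{R}$ and set $f_P(x,y)=e(\alpha a_P(x,y))$. For an integer $\rho\ge0$, $f_P^{(\rho)}(x,y)=f_P(x\bmod q^\rho,y)$ and, for an integer $n\ge1$, $f_P^{(\rho)}(n)=f_P^{(\rho)}(n,T_q(n))$. The implied constant depends at most on $q$. *)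

(* Defs.v *)
From Stdlib Require Import Reals Lra Lia List Arith ZArith.
Open Scope R_scope.

Definition Cx : Type := (R * R)%type.
Definition Cx0 : Cx := (0, 0).
Definition Cadd (z w : Cx) : Cx := (fst z + fst w, snd z + snd w).
Definition Cmul (z w : Cx) : Cx :=
  (fst z * fst w - snd z * snd w, fst z * snd w + snd z * fst w).
Definition Cconj (z : Cx) : Cx := (fst z, - snd z).
Definition Cscale (r : R) (z : Cx) : Cx := (r * fst z, r * snd z).
Definition Cnorm (z : Cx) : R := sqrt (fst z * fst z + snd z * snd z).

Definition ee (x : R) : Cx := (cos (2 * PI * x), sin (2 * PI * x)).

Definition csum (n : nat) (f : nat -> Cx) : Cx :=
  fold_right Cadd Cx0 (map f (seq 0 n)).
Definition rsum (n : nat) (f : nat -> R) : R :=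
  fold_right Rplus 0 (map f (seq 0 n)).

Definition digit (q i n : nat) : nat := ((n / q ^ i) mod q)%nat.

(* a_P(x,y) = sum_{i>=0} eps_{i+P(y)}(x) ... eps_i(x).
   Terms with i > x vanish (eps_i(x) = 0 as q^i > x), so the sum is
   truncated to 0 <= i <= x. *)
Definition aP (q : nat) (P : nat -> nat) (x y : nat) : nat :=
  fold_right Nat.add 0%nat
    (map (fun i => fold_right Nat.mul 1%nat
                     (map (fun j => digit q (i + j) x) (seq 0 (S (P y)))))
         (seq 0 (S x))).

Definition Tq (q n : nat) : nat :=
  Z.to_nat (Int_part (ln (INR n) / ln (INR q))).

Definition fP (q : nat) (P : nat -> nat) (alpha : R) (x y : nat) : Cx :=
  ee (alpha * INR (aP q P x y)).

Definition fPrho (q : nat) (P : nat -> nat) (alpha : R) (rho n : nat) : Cx :=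
  fP q P alpha (n mod q ^ rho) (Tq q n).

Definition cfun (q : nat) (P : nat -> nat) (alpha : R) (kappa rho1 l u h : nat) : Cx :=
  let base := (q ^ (kappa + rho1) * (q ^ l / q ^ rho1))%nat in
  Cscale (/ INR (q ^ rho1))
    (csum (q ^ rho1) (fun w =>
       Cmul (Cmul (fPrho q P alpha (kappa + rho1) (u + w * q ^ kappa + base))
                  (Cconj (fPrho q P alpha (kappa + rho1) (w * q ^ kappa + base))))
            (ee (- (INR h * INR w) / INR (q ^ rho1))))).

(* S(M,d,l); m' ranges over integers with M/(qd) <= m' < M/d (all such m'
   are positive and < M, so summing over 0 <= m' < M with the filter is exact). *)
Definition Ssum (q : nat) (P : nat -> nat) (alpha : R) (mu nu M d : Z)
    (kappa rho1 l : nat) (theta : R) : R :=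
  rsum (q ^ rho1) (fun h =>
    rsum (Z.to_nat M) (fun m =>
      if Rle_dec (IZR M / (INR q * IZR d)) (INR m) then
      if Rlt_dec (INR m) (IZR M / IZR d) then
        / INR m *
        rsum m (fun k =>
          if Nat.eqb (Nat.gcd k m) 1 then
            Cnorm (csum (q ^ kappa) (fun u =>
              Cmul (cfun q P alpha kappa rho1 l u h)
                   (ee (- (INR u * theta) / powerRZ (INR q) (mu + nu)
                        + INR u * INR k / INR m))))
          else 0)
      else 0 else 0)).

(* Main.v *)
Require Import Defs.
From Stdlib Require Import Reals Lra Lia List Arith ZArith Classical.
Open Scope R_scope.

Definition lsum {A} (l : list A) (f : A -> R) : R := fold_right Rplus 0 (map f l).
Definition clsum {A} (l : list A) (f : A -> Cx) : Cx := fold_right Cadd Cx0 (map f l).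

Lemma rsum_lsum n f : rsum n f = lsum (seq 0 n) f. Proof. reflexivity. Qed.
Lemma csum_clsum n f : csum n f = clsum (seq 0 n) f. Proof. reflexivity. Qed.

Lemma lsum_nil {A} (f : A -> R) : lsum nil f = 0. Proof. reflexivity. Qed.
Lemma lsum_cons {A} a l (f : A -> R) : lsum (a :: l) f = f a + lsum l f.
Proof. reflexivity. Qed.
Lemma lsum_app {A} l1 l2 (f : A -> R) : lsum (l1 ++ l2) f = lsum l1 f + lsum l2 f.
Proof. unfold lsum; induction l1; simpl; [ring| rewrite IHl1; ring]. Qed.

Lemma lsum_ext {A} l (f g : A -> R) : (forall x, In x l -> f x = g x) -> lsum l f = lsum l g.
Proof. induction l; intros H; simpl; auto. unfold lsum in *; simpl.
 rewrite H by (left; auto). rewrite IHl; auto. intros; apply H; right; auto. Qed.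
Lemma lsum_le {A} l (f g : A -> R) : (forall x, In x l -> f x <= g x) -> lsum l f <= lsum l g.
Proof. induction l; intros H; simpl; unfold lsum; simpl; [lra|].
 assert (f a <= g a) by (apply H; left; auto).
 assert (lsum l f <= lsum l g) by (apply IHl; intros; apply H; right; auto).
 unfold lsum in *; lra. Qed.
Lemma lsum_nonneg {A} l (f : A -> R) : (forall x, In x l -> 0 <= f x) -> 0 <= lsum l f.
Proof. intros H. replace 0 with (lsum l (fun _ => 0)). apply lsum_le; auto.
 induction l; simpl; auto. unfold lsum in *; simpl; rewrite IHl; try ring. intros; apply H; right; auto. Qed.
Lemma lsum_plus {A} l (f g : A -> R) : lsum l (fun x => f x + g x) = lsum l f + lsum l g.
Proof. induction l; unfold lsum in *; simpl; [ring|]. rewrite IHl; ring. Qed.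
Lemma lsum_minus {A} l (f g : A -> R) : lsum l (fun x => f x - g x) = lsum l f - lsum l g.
Proof. induction l; unfold lsum in *; simpl; [ring|]. rewrite IHl; ring. Qed.
Lemma lsum_scal {A} l c (f : A -> R) : lsum l (fun x => c * f x) = c * lsum l f.
Proof. induction l; unfold lsum in *; simpl; [ring|]. rewrite IHl; ring. Qed.
Lemma lsum_scal_r {A} l c (f : A -> R) : lsum l (fun x => f x * c) = lsum l f * c.
Proof. induction l; unfold lsum in *; simpl; [ring|]. rewrite IHl; ring. Qed.
Lemma lsum_zero {A} l (f : A -> R) : (forall x, In x l -> f x = 0) -> lsum l f = 0.
Proof. intros H. transitivity (lsum l (fun _ => 0)). apply lsum_ext; auto.
 clear H; induction l; unfold lsum in *; simpl; auto. rewrite IHl; ring. Qed.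
Lemma lsum_swap {A B} (l1 : list A) (l2 : list B) (f : A -> B -> R) :
  lsum l1 (fun a => lsum l2 (fun b => f a b)) = lsum l2 (fun b => lsum l1 (fun a => f a b)).
Proof. induction l1; simpl.
 - symmetry; apply lsum_zero; auto.
 - rewrite lsum_cons, IHl1. rewrite <- lsum_plus. reflexivity. Qed.
Lemma lsum_map {A B} (g : A -> B) l (f : B -> R) : lsum (map g l) f = lsum l (fun x => f (g x)).
Proof. unfold lsum; rewrite map_map; auto. Qed.
Lemma lsum_flat_map {A B} (F : A -> list B) l (f : B -> R) :
  lsum (flat_map F l) f = lsum l (fun a => lsum (F a) f).
Proof. induction l; simpl; auto. rewrite lsum_app, lsum_cons, IHl; auto. Qed.
Lemma lsum_filter {A} (P : A -> bool) l (f : A -> R) :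
  lsum (filter P l) f = lsum l (fun x => if P x then f x else 0).
Proof. induction l; simpl; auto. rewrite lsum_cons. destruct (P a); rewrite ?lsum_cons, IHl; ring. Qed.
Lemma lsum_abs {A} l (f : A -> R) : Rabs (lsum l f) <= lsum l (fun x => Rabs (f x)).
Proof. induction l; unfold lsum in *; simpl. rewrite Rabs_R0; lra.
 eapply Rle_trans. apply Rabs_triang. lra. Qed.
Lemma rsum_S n f : rsum (S n) f = rsum n f + f n.
Proof. rewrite !rsum_lsum, seq_S, lsum_app. simpl. unfold lsum; simpl; ring. Qed.
Lemma rsum_shift n f : rsum (S n) f = f 0%nat + rsum n (fun i => f (S i)).
Proof. rewrite !rsum_lsum. simpl. rewrite lsum_cons, <- seq_shift, lsum_map. auto. Qed.

Lemma lsum_CS {A} l (f g : A -> R) :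
  (lsum l (fun x => f x * g x))^2 <= lsum l (fun x => f x ^ 2) * lsum l (fun x => g x ^ 2).
Proof.
  set (a := lsum l (fun x => f x ^ 2)). set (b := lsum l (fun x => g x ^ 2)).
  set (c := lsum l (fun x => f x * g x)).
  assert (Ha : 0 <= a) by (apply lsum_nonneg; intros; apply pow2_ge_0).
  assert (Hq : forall t, 0 <= a * t^2 - 2 * c * t + b).
  { intros t. assert (E: a * t^2 - 2*c*t + b = lsum l (fun x => (t * f x - g x)^2)).
    { rewrite (lsum_ext _ _ (fun x => t^2 * (f x ^2) + (-2 * t) * (f x * g x) + g x ^ 2)) by (intros; ring).
      rewrite !lsum_plus, !lsum_scal. unfold a, b, c. ring. }
    rewrite E. apply lsum_nonneg; intros; apply pow2_ge_0. }
  destruct (Req_dec a 0) as [H0|H0].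
  -
    assert (c = 0).
    { destruct (Req_dec c 0); auto. exfalso. specialize (Hq ((b + 1) / (2 * c))).
      rewrite H0 in Hq. replace (0 * ((b + 1) / (2 * c)) ^ 2 - 2 * c * ((b + 1) / (2 * c)) + b) with (-1) in Hq by (field; auto). lra. }
    rewrite H; nra.
  - specialize (Hq (c / a)). assert (0 < a) by lra.
    assert (a * (c/a)^2 - 2*c*(c/a) + b = (a*b - c^2)/a) by (field; auto).
    rewrite H1 in Hq. apply Rmult_le_compat_r with (r := a) in Hq; [|lra].
    unfold Rdiv in Hq. rewrite Rmult_assoc, Rinv_l in Hq by auto. nra.
Qed.

Lemma lsum_CS_sqrt {A} l (f g : A -> R) :
  lsum l (fun x => f x * g x) <= sqrt (lsum l (fun x => f x ^ 2)) * sqrt (lsum l (fun x => g x ^ 2)).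
Proof.
  rewrite <- sqrt_mult by (apply lsum_nonneg; intros; nra).
  destruct (Rle_lt_dec (lsum l (fun x => f x * g x)) 0).
  - eapply Rle_trans; eauto; apply sqrt_pos.
  - rewrite <- (sqrt_pow2 (lsum _ _)) by lra. apply sqrt_le_1_alt. apply lsum_CS.
Qed.

Definition n2 (z : Cx) : R := fst z * fst z + snd z * snd z.
Definition dot (z w : Cx) : R := fst z * fst w + snd z * snd w.

Lemma Cx_ext (z w : Cx) : fst z = fst w -> snd z = snd w -> z = w.
Proof. destruct z, w; simpl; intros; subst; auto. Qed.

Lemma clsum_fst {A} l (f : A -> Cx) : fst (clsum l f) = lsum l (fun x => fst (f x)).
Proof. unfold clsum, lsum; induction l; simpl; auto. rewrite IHl; auto. Qed.
Lemma clsum_snd {A} l (f : A -> Cx) : snd (clsum l f) = lsum l (fun x => snd (f x)).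
Proof. unfold clsum, lsum; induction l; simpl; auto. rewrite IHl; auto. Qed.
Lemma clsum_ext {A} l (f g : A -> Cx) : (forall x, In x l -> f x = g x) -> clsum l f = clsum l g.
Proof. intros H; apply Cx_ext; rewrite ?clsum_fst, ?clsum_snd; apply lsum_ext; intros; rewrite H; auto. Qed.

Lemma n2_nonneg z : 0 <= n2 z. Proof. unfold n2; nra. Qed.
Lemma Cnorm_nonneg z : 0 <= Cnorm z. Proof. apply sqrt_pos. Qed.
Lemma Cnorm_sq z : Cnorm z ^ 2 = n2 z.
Proof. unfold Cnorm. simpl. rewrite Rmult_1_r, sqrt_sqrt; auto. apply n2_nonneg. Qed.
Lemma n2_mul z w : n2 (Cmul z w) = n2 z * n2 w.
Proof. destruct z, w; unfold n2, Cmul; simpl; ring. Qed.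
Lemma Cnorm_mul z w : Cnorm (Cmul z w) = Cnorm z * Cnorm w.
Proof. unfold Cnorm. rewrite <- sqrt_mult by apply n2_nonneg. fold (n2 (Cmul z w)). rewrite n2_mul; auto. Qed.
Lemma n2_conj z : n2 (Cconj z) = n2 z. Proof. destruct z; unfold n2; simpl; ring. Qed.
Lemma n2_ee x : n2 (ee x) = 1.
Proof. unfold n2, ee; simpl. pose proof (sin2_cos2 (2*PI*x)). unfold Rsqr in H. lra. Qed.
Lemma Cnorm_ee x : Cnorm (ee x) = 1.
Proof. unfold Cnorm; fold (n2 (ee x)); rewrite n2_ee; apply sqrt_1. Qed.
Lemma n2_scale r z : n2 (Cscale r z) = r^2 * n2 z. Proof. destruct z; unfold n2; simpl; ring. Qed.

Lemma dot_sq_le z w : (dot z w)^2 <= n2 z * n2 w.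
Proof. destruct z as [a b], w as [c e]; unfold dot, n2; simpl.
  assert (0 <= (a*e - b*c)^2) by apply pow2_ge_0. nra. Qed.
Lemma dot_le z w : dot z w <= Cnorm z * Cnorm w.
Proof. unfold Cnorm. rewrite <- sqrt_mult by apply n2_nonneg. fold (n2 z) (n2 w).
  destruct (Rle_lt_dec (dot z w) 0). eapply Rle_trans; eauto; apply sqrt_pos.
  rewrite <- (sqrt_pow2 (dot z w)) by lra. apply sqrt_le_1_alt, dot_sq_le. Qed.
Lemma dot_self z : dot z z = n2 z. Proof. reflexivity. Qed.
Lemma dot_sym z w : dot z w = dot w z. Proof. unfold dot; ring. Qed.

Lemma dot_clsum_l {A} l (f : A -> Cx) w : dot (clsum l f) w = lsum l (fun x => dot (f x) w).
Proof. unfold dot. rewrite clsum_fst, clsum_snd, <- !lsum_scal_r, <- lsum_plus. auto. Qed.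
Lemma dot_clsum_r {A} l (f : A -> Cx) w : dot w (clsum l f) = lsum l (fun x => dot w (f x)).
Proof. rewrite dot_sym, dot_clsum_l. apply lsum_ext; intros; apply dot_sym. Qed.
Lemma n2_clsum {A} l (f : A -> Cx) :
  n2 (clsum l f) = lsum l (fun i => lsum l (fun j => dot (f i) (f j))).
Proof. rewrite <- dot_self, dot_clsum_l. apply lsum_ext; intros; apply dot_clsum_r. Qed.

Lemma Cnorm_add z w : Cnorm (Cadd z w) <= Cnorm z + Cnorm w.
Proof.
  assert (H: n2 (Cadd z w) = n2 z + 2 * dot z w + n2 w) by (destruct z, w; unfold n2, dot; simpl; ring).
  pose proof (dot_le z w). pose proof (Cnorm_nonneg z). pose proof (Cnorm_nonneg w).
  unfold Cnorm at 1. fold (n2 (Cadd z w)). rewrite <- (sqrt_pow2 (Cnorm z + Cnorm w)) by lra.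
  apply sqrt_le_1_alt. rewrite H, <- (Cnorm_sq z), <- (Cnorm_sq w). simpl. ring_simplify. lra. Qed.
Lemma Cnorm_clsum {A} l (f : A -> Cx) : Cnorm (clsum l f) <= lsum l (fun x => Cnorm (f x)).
Proof. induction l as [|a l IH]. unfold clsum, Cnorm, Cx0; simpl. rewrite Rmult_0_l, Rplus_0_l, sqrt_0. unfold lsum; simpl; lra.
  change (clsum (a::l) f) with (Cadd (f a) (clsum l f)).
  rewrite lsum_cons. eapply Rle_trans. apply Cnorm_add. lra. Qed.

Lemma ee_add a b : ee (a + b) = Cmul (ee a) (ee b).
Proof. unfold ee, Cmul; simpl. rewrite Rmult_plus_distr_l, cos_plus, sin_plus. f_equal; ring. Qed.
Lemma ee_0 : ee 0 = (1, 0). Proof. unfold ee. rewrite Rmult_0_r, cos_0, sin_0; auto. Qed.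
Lemma Cconj_ee x : Cconj (ee x) = ee (- x).
Proof. unfold ee, Cconj; simpl. replace (2*PI*-x) with (-(2*PI*x)) by ring. rewrite cos_neg, sin_neg; auto. Qed.

Lemma Cmul_clsum_l {A} z l (f : A -> Cx) : Cmul z (clsum l f) = clsum l (fun x => Cmul z (f x)).
Proof. apply Cx_ext; unfold Cmul; simpl; rewrite ?clsum_fst, ?clsum_snd; simpl.
  - rewrite <- !lsum_scal, <- lsum_minus; auto.
  - rewrite <- !lsum_scal, <- lsum_plus; auto. Qed.
Lemma Cmul_clsum_r {A} z l (f : A -> Cx) : Cmul (clsum l f) z = clsum l (fun x => Cmul (f x) z).
Proof. apply Cx_ext; unfold Cmul; simpl; rewrite ?clsum_fst, ?clsum_snd; simpl.
  - rewrite <- !lsum_scal_r, <- lsum_minus; auto.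
  - rewrite <- !lsum_scal_r, <- lsum_plus; auto. Qed.
Lemma Cscale_clsum {A} r l (f : A -> Cx) : Cscale r (clsum l f) = clsum l (fun x => Cscale r (f x)).
Proof. apply Cx_ext; unfold Cscale; simpl; rewrite ?clsum_fst, ?clsum_snd; simpl; rewrite <- lsum_scal; auto. Qed.

Lemma Cmul_assoc a b c : Cmul (Cmul a b) c = Cmul a (Cmul b c).
Proof. destruct a, b, c; unfold Cmul; simpl; f_equal; ring. Qed.
Lemma Cmul_comm a b : Cmul a b = Cmul b a.
Proof. destruct a, b; unfold Cmul; simpl; f_equal; ring. Qed.

Lemma dot_rot z w a : dot (Cmul z (ee a)) (Cmul w (ee a)) = dot z w.
Proof. destruct z, w; unfold dot, Cmul, ee; simpl. pose proof (sin2_cos2 (2*PI*a)). unfold Rsqr in H.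
  set (c := cos (2*PI*a)) in *. set (s := sin (2*PI*a)) in *.
  transitivity ((r*r1 + r0*r2) * (s*s + c*c)); [ring|]. rewrite H; ring. Qed.

Lemma dot_rot2 z w a b : dot (Cmul z (ee a)) (Cmul w (ee b)) = dot (Cmul z (ee (a - b))) w.
Proof. replace a with ((a - b) + b) at 1 by ring. rewrite ee_add, <- Cmul_assoc, dot_rot; auto. Qed.

Lemma dot_mul_le z w x : dot (Cmul z x) w <= Cnorm z * Cnorm x * Cnorm w.
Proof. rewrite <- Cnorm_mul. apply dot_le. Qed.

Lemma Cnorm_le_1_lsum {A} l (f : A -> Cx) : (forall x, Cnorm (f x) <= 1) -> Cnorm (clsum l f) <= INR (length l).
Proof. intros H. eapply Rle_trans. apply Cnorm_clsum. induction l as [|a l IH]. unfold lsum; simpl; lra.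
  rewrite lsum_cons. change (length (a::l)) with (S (length l)). rewrite S_INR. specialize (H a); lra. Qed.

Lemma n2_zero z : n2 z = 0 -> z = Cx0.
Proof. destruct z as [a b]; unfold n2; simpl; intros. assert (a = 0) by nra. assert (b = 0) by nra. subst; auto. Qed.

Definition Gs (K : nat) (y : R) : Cx := clsum (seq 0 K) (fun i => ee (INR i * y)).
Definition m1 : Cx := (-1, 0).

Lemma clsum_app {A} l1 l2 (f : A -> Cx) : clsum (l1 ++ l2) f = Cadd (clsum l1 f) (clsum l2 f).
Proof. apply Cx_ext; rewrite ?clsum_fst, ?clsum_snd; simpl; rewrite ?clsum_fst, ?clsum_snd; apply lsum_app. Qed.

Lemma geo K y : Cmul (Cadd (ee y) m1) (Gs K y) = Cadd (ee (INR K * y)) m1.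
Proof.
  induction K.
  - unfold Gs; simpl. rewrite Rmult_0_l, ee_0. unfold Cmul, Cadd, m1, Cx0; simpl. f_equal; ring.
  - unfold Gs in *. rewrite seq_S, clsum_app. simpl plus.
    change (clsum (0 + K :: nil)%nat (fun i => ee (INR i * y))) with (Cadd (ee (INR (0+K) * y)) Cx0).
    simpl plus. rewrite S_INR.
    replace ((INR K + 1) * y) with (INR K * y + y) by ring. rewrite ee_add.
    revert IHK. generalize (clsum (seq 0 K) (fun i => ee (INR i * y))). intros G IH.
    unfold ee in *. set (a := cos (2*PI*y)) in *. set (b := sin (2*PI*y)) in *.
    set (c := cos (2*PI*(INR K * y))) in *. set (e := sin (2*PI*(INR K * y))) in *.
    destruct G as [g1 g2]. unfold Cmul, Cadd, m1, Cx0 in *; simpl in *.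
    injection IH; intros H1 H2. change (cos (2 * PI * (INR K * y))) with c. change (sin (2 * PI * (INR K * y))) with e. f_equal; lra.
Qed.

Lemma n2_eem1 y : n2 (Cadd (ee y) m1) = 2 - 2 * cos (2 * PI * y).
Proof. unfold n2, ee, Cadd, m1; simpl. pose proof (sin2_cos2 (2*PI*y)). unfold Rsqr in H. nra. Qed.

Lemma ee_int y n : ee (y + IZR n) = ee y.
Proof.
  rewrite ee_add. assert (ee (IZR n) = (1, 0)).
  { destruct (Z_le_gt_dec 0 n).
    - rewrite <- (Z2Nat.id n l), <- INR_IZR_INZ. unfold ee.
      replace (2 * PI * INR (Z.to_nat n)) with (0 + 2 * INR (Z.to_nat n) * PI) by ring.
      rewrite cos_period, sin_period, cos_0, sin_0; auto.
    - replace n with (- Z.of_nat (Z.to_nat (- n)))%Z by lia. rewrite opp_IZR, <- INR_IZR_INZ. unfold ee.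
      replace (2 * PI * - INR (Z.to_nat (-n))) with (- (0 + 2 * INR (Z.to_nat (-n)) * PI)) by ring.
      rewrite cos_neg, sin_neg, cos_period, sin_period, cos_0, sin_0. f_equal; ring. }
  rewrite H. destruct (ee y); unfold Cmul; simpl; f_equal; ring.
Qed.

Lemma sin_lower s : 0 <= s <= PI / 2 -> s / PI <= sin s.
Proof.
  intros Hs. pose proof PI2_3_2. pose proof PI_4.
  destruct (sin_bound s 0) as [H1 _]; try lra.
  unfold sin_approx, sin_term in H1. simpl in H1.
  assert (s - s^3/6 <= sin s) by (unfold fact in H1; simpl in H1; lra).
  assert (s / PI <= s / 3). { unfold Rdiv. apply Rmult_le_compat_l; try lra. apply Rinv_le_contravar; lra. }
  nra.
Qed.

Lemma n2_eem1_lb y : Rabs y <= 1/2 -> 4 * y ^ 2 <= n2 (Cadd (ee y) m1).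
Proof.
  intros Hy. rewrite n2_eem1. replace (2 * PI * y) with (2 * (PI * y)) by ring. rewrite cos_2a_sin.
  pose proof PI_RGT_0.
  assert (y ^ 2 <= sin (PI * y) ^ 2).
  { destruct (Rle_lt_dec 0 y).
    - pose proof (sin_lower (PI * y)). rewrite Rabs_right in Hy by lra.
      assert (y <= sin (PI*y)). { replace y with (PI * y / PI) at 1 by (field; lra). apply H0; split; nra. }
      nra.
    - pose proof (sin_lower (PI * (-y))). rewrite Rabs_left in Hy by lra.
      assert (-y <= sin (PI*(-y))). { replace (-y) with (PI * (-y) / PI) at 1 by (field; lra). apply H0; split; nra. }
      replace (PI * - y) with (- (PI*y)) in H1 by ring. rewrite sin_neg in H1. nra. }
  nra.
Qed.

Lemma n2_Gs_trivial K y : n2 (Gs K y) <= INR K ^ 2.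
Proof.
  rewrite <- Cnorm_sq. unfold Gs. pose proof (Cnorm_le_1_lsum (seq 0 K) (fun i => ee (INR i * y))).
  rewrite length_seq in H. assert (Cnorm (clsum (seq 0 K) (fun i => ee (INR i * y))) <= INR K).
  apply H; intros; rewrite Cnorm_ee; lra. pose proof (Cnorm_nonneg (clsum (seq 0 K) (fun i => ee (INR i * y)))). nra.
Qed.

Lemma n2_Gs_decay K y n : Rabs (y + IZR n) <= 1/2 -> y + IZR n <> 0 ->
  n2 (Gs K y) <= / (y + IZR n) ^ 2.
Proof.
  intros H1 H2. pose proof (geo K y). apply (f_equal n2) in H. rewrite n2_mul in H.
  rewrite <- (ee_int y n) in H. pose proof (n2_eem1_lb _ H1).
  assert (n2 (Cadd (ee (INR K * y)) m1) <= 4). { rewrite n2_eem1. pose proof (COS_bound (2*PI*(INR K * y))). lra. }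
  assert (0 < (y + IZR n)^2) by (simpl; rewrite Rmult_1_r; apply Rsqr_pos_lt; auto).
  pose proof (n2_nonneg (Gs K y)).
  apply (Rmult_le_reg_l (4 * (y + IZR n)^2)). lra.
  replace (4 * (y + IZR n) ^ 2 * / (y + IZR n) ^ 2) with 4 by (field; auto).
  rewrite <- H in H3. nra.
Qed.

Lemma basel n : rsum (S n) (fun j => / (INR (S j)) ^ 2) <= 2 - / INR (S n).
Proof.
  induction n.
  - rewrite rsum_S. simpl. unfold rsum, lsum; simpl. lra.
  - rewrite rsum_S. set (a := INR (S n)) in *.
    assert (Ha : 1 <= a) by (unfold a; rewrite S_INR; pose proof (pos_INR n); lra).
    replace (INR (S (S n))) with (a + 1) by (unfold a; rewrite (S_INR (S n)); auto).
    assert (/ (a+1)^2 <= / a - / (a + 1)).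
    { replace (/a - /(a+1)) with (/ (a * (a+1))) by (field; lra).
      apply Rinv_le_contravar. nra. nra. }
    lra.
Qed.

Lemma rsum_nonneg n f : (forall i, 0 <= f i) -> 0 <= rsum n f.
Proof. intros; apply lsum_nonneg; auto. Qed.

Lemma rsum_mono n m f : (forall i, 0 <= f i) -> rsum n f <= rsum (n + m) f.
Proof. intros H. induction m. rewrite Nat.add_0_r; lra. rewrite Nat.add_succ_r, rsum_S. specialize (H (n+m)%nat). lra. Qed.

Section Count.
Variables (Aa Bb dl : R).
Hypothesis HA : 0 <= Aa.
Hypothesis HB : 0 <= Bb.
Hypothesis Hdl : 0 < dl.

Definition hh (k : nat) : R := if (k <=? 1)%nat then Aa else Bb / (dl ^ 2 * (INR k - 1) ^ 2).

Lemma hh_nonneg k : 0 <= hh k.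
Proof. unfold hh. destruct (Nat.leb_spec k 1); auto. apply Rmult_le_pos; auto.
  apply Rlt_le, Rinv_0_lt_compat.
  assert (1 < INR k) by (apply (lt_INR 1); lia). apply Rmult_lt_0_compat; apply pow_lt; lra. Qed.

Lemma hh_sum2 L : rsum (L + 2) hh = 2 * Aa + Bb / dl ^ 2 * rsum L (fun j => / (INR (S j)) ^ 2).
Proof.
  induction L.
  - simpl. unfold rsum, lsum, hh; simpl. ring.
  - replace (S L + 2)%nat with (S (L + 2)) by lia. rewrite rsum_S, IHL, rsum_S.
    unfold hh. destruct (Nat.leb_spec (L+2) 1). lia.
    rewrite plus_INR. simpl (INR 2). replace (INR L + (1+1) - 1) with (INR (S L)) by (rewrite S_INR; ring).
    field. split. apply not_0_INR; lia. lra.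
Qed.

Lemma hh_sum L : rsum L hh <= 2 * Aa + 2 * Bb / dl ^ 2.
Proof.
  eapply Rle_trans. apply (rsum_mono L 2). apply hh_nonneg. rewrite hh_sum2.
  replace (2 * Bb / dl^2) with (2 * (Bb / dl^2)) by (unfold Rdiv; ring).
  assert (0 <= Bb / dl^2) by (apply Rmult_le_pos; auto; apply Rlt_le, Rinv_0_lt_compat, pow_lt; lra).
  destruct L. replace (rsum 0 _) with 0 by reflexivity. lra.
  pose proof (basel L). assert (0 < / INR (S L)) by (apply Rinv_0_lt_compat, lt_0_INR; lia).
  nra.
Qed.

Lemma hh_sum_S L : rsum L (fun k => hh (S k)) <= 2 * Aa + 2 * Bb / dl ^ 2.
Proof. eapply Rle_trans. 2: apply (hh_sum (S L)). rewrite rsum_shift. pose proof (hh_nonneg 0). lra. Qed.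
End Count.

Lemma ind_ge (Rl : list Z) (g : Z -> R) b0 : In b0 Rl -> (forall b, 0 <= g b) ->
  g b0 <= lsum Rl (fun b => if Z.eq_dec b0 b then g b else 0).
Proof.
  induction Rl; simpl; intros Hin Hg. destruct Hin.
  rewrite lsum_cons. assert (0 <= lsum Rl (fun b => if Z.eq_dec b0 b then g b else 0)).
  { apply lsum_nonneg; intros; destruct (Z.eq_dec b0 x); auto; lra. }
  destruct Hin as [E|Hin].
  - subst a. destruct (Z.eq_dec b0 b0); [|congruence]. lra.
  - specialize (IHRl Hin Hg). destruct (Z.eq_dec b0 a); try lra. subst. pose proof (Hg a). lra.
Qed.

Lemma count_le1 {A} (I : list A) (f : A -> Z) b : NoDup I ->
  (forall i j, In i I -> In j I -> f i = f j -> i = j) ->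
  lsum I (fun i => if Z.eq_dec (f i) b then 1 else 0) <= 1.
Proof.
  induction I as [|a I IH]; intros HN Hinj. unfold lsum; simpl; lra.
  rewrite lsum_cons. inversion HN; subst.
  destruct (Z.eq_dec (f a) b).
  - rewrite lsum_zero. lra. intros x Hx. destruct (Z.eq_dec (f x) b); auto.
    exfalso. assert (x = a) by (apply Hinj; simpl; auto; congruence). subst; auto.
  - assert (lsum I (fun i => if Z.eq_dec (f i) b then 1 else 0) <= 1).
    apply IH; auto. intros; apply Hinj; simpl; auto. lra.
Qed.

Definition zround (t : R) : Z := (up (t + 1/2) - 1)%Z.
Lemma zround_spec t : -1/2 <= t - IZR (zround t) < 1/2.
Proof. unfold zround. rewrite minus_IZR. destruct (archimed (t + 1/2)). simpl. lra. Qed.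
Definition zfloor (t : R) : Z := (up t - 1)%Z.
Lemma zfloor_spec t : IZR (zfloor t) <= t < IZR (zfloor t) + 1.
Proof. unfold zfloor. rewrite minus_IZR. destruct (archimed t). simpl. lra. Qed.

Lemma INR_abs_nat z : INR (Z.abs_nat z) = Rabs (IZR z).
Proof. rewrite INR_IZR_INZ, Zabs2Nat.id_abs, abs_IZR. auto. Qed.

Section Counting.
Variables (A : Type) (I : list A) (x : A -> R) (dl Aa Bb : R) (Phi : R -> R).
Hypothesis HN : NoDup I.
Hypothesis Hdl : 0 < dl.
Hypothesis Hsep : forall i j, In i I -> In j I -> i <> j -> forall n : Z, dl <= Rabs (x i - x j + IZR n).
Hypothesis HA : 0 <= Aa.
Hypothesis HB : 0 <= Bb.
Hypothesis HPhi0 : forall t, 0 <= Phi t.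
Hypothesis HPhiA : forall t, Phi t <= Aa.
Hypothesis HPhiB : forall t n, Rabs (t + IZR n) <= 1/2 -> t + IZR n <> 0 -> Phi t <= Bb / (t + IZR n) ^ 2.

Lemma counting y : lsum I (fun i => Phi (x i - y)) <= 4 * Aa + 4 * Bb / dl ^ 2.
Proof.
  set (sv := fun i => (x i - y) - IZR (zround (x i - y))).
  set (bin := fun i => zfloor (sv i / dl)).
  set (L := (Z.to_nat (up (1 / (2 * dl))) + 1)%nat).
  set (Rng := map (fun k => (- Z.of_nat k - 1)%Z) (seq 0 L) ++ map Z.of_nat (seq 0 L)).
  set (hz := fun b : Z => hh Aa Bb dl (Z.abs_nat b)).
  assert (Hhz : forall b, 0 <= hz b) by (intros; apply hh_nonneg; auto).
  assert (Hval : forall i, Phi (x i - y) <= hz (bin i)).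
  { intros i. pose proof (zround_spec (x i - y)). fold (sv i) in H.
    pose proof (zfloor_spec (sv i / dl)). fold (bin i) in H0.
    unfold hz, hh. rewrite INR_abs_nat. destruct (Nat.leb_spec (Z.abs_nat (bin i)) 1); auto.
    assert (Hs : Rabs (x i - y + IZR (- zround (x i - y))) <= 1/2).
    { rewrite opp_IZR. unfold sv in H. apply Rabs_le. lra. }
    replace (x i - y + IZR (- zround (x i - y))) with (sv i) in Hs by (unfold sv; rewrite opp_IZR; ring).
    assert (Hb : (1 < Rabs (IZR (bin i)))). { rewrite <- INR_abs_nat. apply (lt_INR 1); lia. }
    assert (Hsd : (Rabs (IZR (bin i)) - 1) * dl <= Rabs (sv i)).
    { destruct (Rle_lt_dec 0 (IZR (bin i))).
      - rewrite Rabs_right in * by lra.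
        assert (IZR (bin i) * dl <= sv i). { destruct H0 as [H0 _]. apply (Rmult_le_compat_r dl) in H0; [|lra].
          unfold Rdiv in H0. rewrite Rmult_assoc, Rinv_l in H0; lra. }
        rewrite Rabs_right; nra.
      - rewrite Rabs_left in * by lra.
        assert (sv i < (IZR (bin i) + 1) * dl). { destruct H0 as [_ H0]. apply (Rmult_lt_compat_r dl) in H0; [|lra].
          unfold Rdiv in H0. rewrite Rmult_assoc, Rinv_l in H0; lra. }
        rewrite Rabs_left; nra. }
    assert (Hpos : 0 < (Rabs (IZR (bin i)) - 1) * dl) by nra.
    assert (sv i <> 0). { intro E. rewrite E, Rabs_R0 in Hsd. lra. }
    eapply Rle_trans. apply (HPhiB _ (- zround (x i - y))).
    replace (x i - y + IZR (- zround (x i - y))) with (sv i) by (unfold sv; rewrite opp_IZR; ring). auto.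
    replace (x i - y + IZR (- zround (x i - y))) with (sv i) by (unfold sv; rewrite opp_IZR; ring). auto.
    replace (x i - y + IZR (- zround (x i - y))) with (sv i) by (unfold sv; rewrite opp_IZR; ring).
    unfold Rdiv. apply Rmult_le_compat_l; auto. apply Rinv_le_contravar.
    apply Rmult_lt_0_compat; apply pow_lt; lra.
    replace (dl ^ 2 * (Rabs (IZR (bin i)) - 1) ^ 2) with (((Rabs (IZR (bin i)) - 1) * dl)^2) by ring.
    rewrite <- (pow2_abs (sv i)). apply pow_incr. lra. }
  assert (Hrng : forall i, In (bin i) Rng).
  { intros i. pose proof (zround_spec (x i - y)). fold (sv i) in H.
    pose proof (zfloor_spec (sv i / dl)). fold (bin i) in H0.
    destruct (archimed (1 / (2 * dl))) as [Hu _].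
    assert (Hsl : -1/(2*dl) <= sv i / dl < 1/(2*dl)).
    { split; unfold Rdiv; [replace (-1 * / (2*dl)) with ((-1/2) * / dl) by (field; lra)| replace (1 * / (2*dl)) with ((1/2) * / dl) by (field; lra)].
      apply Rmult_le_compat_r. apply Rlt_le, Rinv_0_lt_compat; lra. lra.
      apply Rmult_lt_compat_r. apply Rinv_0_lt_compat; lra. lra. }
    assert (0 <= up (1/(2*dl)))%Z. { apply le_IZR. assert (0 < 1/(2*dl)) by (unfold Rdiv; apply Rmult_lt_0_compat; [lra| apply Rinv_0_lt_compat; lra]). lra. }
    assert (Hlt : (bin i < up (1/(2*dl)))%Z) by (apply lt_IZR; lra).
    assert (Hgt : (- up (1/(2*dl)) - 1 < bin i)%Z) by (apply lt_IZR; rewrite minus_IZR, opp_IZR; simpl; lra).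
    unfold Rng. apply in_or_app. destruct (Z_lt_le_dec (bin i) 0).
    - left. apply in_map_iff. exists (Z.to_nat (- bin i - 1)). split. lia. apply in_seq. unfold L. lia.
    - right. apply in_map_iff. exists (Z.to_nat (bin i)). split. lia. apply in_seq. unfold L. lia. }
  assert (Hinj : forall i j, In i I -> In j I -> bin i = bin j -> i = j).
  { intros i j Hi Hj E. destruct (classic (i = j)) as [|Hne]; auto. exfalso.
    pose proof (Hsep i j Hi Hj Hne (zround (x j - y) - zround (x i - y))).
    pose proof (zfloor_spec (sv i / dl)). pose proof (zfloor_spec (sv j / dl)).
    fold (bin i) in H0. fold (bin j) in H1. rewrite E in H0.
    assert (Rabs (sv i / dl - sv j / dl) < 1) by (apply Rabs_def1; lra).
    replace (sv i / dl - sv j / dl) with ((sv i - sv j) / dl) in H2 by (field; lra).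
    unfold Rdiv in H2. rewrite Rabs_mult, (Rabs_right (/dl)) in H2 by (apply Rle_ge, Rlt_le, Rinv_0_lt_compat; lra).
    replace (x i - x j + IZR (zround (x j - y) - zround (x i - y))) with (sv i - sv j) in H
      by (unfold sv; rewrite minus_IZR; ring).
    apply (Rmult_lt_compat_r dl) in H2; [|lra]. rewrite Rmult_assoc, Rinv_l in H2; lra. }
  apply Rle_trans with (lsum I (fun i => lsum Rng (fun b => if Z.eq_dec (bin i) b then hz b else 0))).
  { apply lsum_le; intros i Hi. eapply Rle_trans. apply Hval. apply ind_ge; auto. }
  rewrite lsum_swap.
  apply Rle_trans with (lsum Rng hz).
  { apply lsum_le; intros b Hb.
    rewrite (lsum_ext _ _ (fun i => hz b * (if Z.eq_dec (bin i) b then 1 else 0))).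
    rewrite lsum_scal. pose proof (count_le1 I bin b HN Hinj). pose proof (Hhz b).
    assert (0 <= lsum I (fun i => if Z.eq_dec (bin i) b then 1 else 0)) by (apply lsum_nonneg; intros; destruct Z.eq_dec; lra).
    nra. intros i _. destruct (Z.eq_dec (bin i) b); subst; ring. }
  unfold Rng. rewrite lsum_app, !lsum_map.
  rewrite (lsum_ext _ (fun k => hz (- Z.of_nat k - 1)%Z) (fun k => hh Aa Bb dl (S k))).
  rewrite (lsum_ext _ (fun k => hz (Z.of_nat k)) (hh Aa Bb dl)).
  pose proof (hh_sum_S Aa Bb dl HA HB Hdl L). pose proof (hh_sum Aa Bb dl HA HB Hdl L).
  unfold rsum in *. unfold lsum in *.
  replace (4 * Bb / dl^2) with (2 * (2 * Bb / dl^2)) by (unfold Rdiv; ring). lra.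
  intros k _; unfold hz; f_equal; lia.
  intros k _; unfold hz; f_equal; lia.
Qed.
End Counting.

Lemma lsum_seq_shift s n f : lsum (seq s n) f = lsum (seq 0 n) (fun u => f (s + u)%nat).
Proof. revert s; induction n; intros s; auto. simpl. rewrite !lsum_cons. f_equal. f_equal; lia.
  rewrite IHn. rewrite <- seq_shift, lsum_map. apply lsum_ext; intros. f_equal; lia. Qed.

Lemma lsum_const {A} (l : list A) c : lsum l (fun _ => c) = INR (length l) * c.
Proof. induction l as [|a l IH]. unfold lsum; simpl; ring. rewrite lsum_cons, IH.
  change (length (a :: l)) with (S (length l)). rewrite S_INR; ring. Qed.

Lemma seq_split a b : seq 0 (a + b) = seq 0 a ++ seq a b.
Proof. rewrite seq_app. auto. Qed.

Lemma shift_window (g : nat -> R) N i : (forall t, 0 <= g t) -> (i <= N)%nat ->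
  lsum (seq 0 N) (fun u => g (u + N)%nat) <= lsum (seq 0 (2 * N)) (fun j => g (i + j)%nat).
Proof.
  intros Hg Hi. replace (2 * N)%nat with ((N - i) + (N + i))%nat by lia.
  rewrite seq_split, lsum_app. replace (N - i + (N + i))%nat with ((N - i) + N + i)%nat by lia.
  rewrite seq_app, lsum_app, (lsum_seq_shift (N - i) N).
  assert (0 <= lsum (seq 0 (N - i)) (fun j => g (i + j)%nat)) by (apply lsum_nonneg; auto).
  assert (0 <= lsum (seq (N - i + N) i) (fun j => g (i + j)%nat)) by (apply lsum_nonneg; auto).
  rewrite (lsum_ext _ (fun u => g (i + (N - i + u))%nat) (fun u => g (u + N)%nat)). lra.
  intros; f_equal; lia.
Qed.

Lemma double_geo K D N :
  clsum (seq 0 K) (fun i => clsum (seq 0 K) (fun j => ee ((INR (i + j) - N) * D)))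
  = Cmul (ee (- N * D)) (Cmul (Gs K D) (Gs K D)).
Proof.
  unfold Gs. rewrite Cmul_clsum_r, Cmul_clsum_l. apply clsum_ext; intros i _.
  rewrite Cmul_clsum_l, Cmul_clsum_l. apply clsum_ext; intros j _.
  rewrite plus_INR. replace ((INR i + INR j - N) * D) with (- N * D + (INR i * D + INR j * D)) by ring.
  rewrite !ee_add. auto.
Qed.

Section LS.
Variables (A : Type) (I : list A) (N : nat).
Hypothesis HN : NoDup I.
Hypothesis HN1 : (1 <= N)%nat.

Section Dual.
Variables (y : A -> R) (b : A -> Cx).
Hypothesis Hsep : forall i j, In i I -> In j I -> i <> j -> forall n : Z, / INR N <= Rabs (y i - y j + IZR n).

Definition Phi (t : R) : R := n2 (Gs (2 * N) t).

Lemma Phi_count (z : R) (sg : R) : (sg = 1 \/ sg = -1) ->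
  lsum I (fun i => Phi (sg * (y i - z))) <= 20 * INR N ^ 2.
Proof.
  intros Hsg. assert (HNp : 0 < INR N) by (apply lt_0_INR; lia).
  pose proof (counting A I y (/ INR N) (INR (2*N) ^ 2) 1 (fun t => Phi (sg * t)) HN) as H.
  assert (H1 : 0 < / INR N) by (apply Rinv_0_lt_compat; auto).
  assert (H2 : 0 <= INR (2*N) ^ 2) by apply pow2_ge_0.
  assert (H3 : forall t, 0 <= Phi (sg * t)) by (intros; apply n2_nonneg).
  assert (H4 : forall t, Phi (sg * t) <= INR (2*N) ^ 2) by (intros; apply n2_Gs_trivial).
  assert (H5 : forall t n, Rabs (t + IZR n) <= 1/2 -> t + IZR n <> 0 -> Phi (sg * t) <= 1 / (t + IZR n) ^ 2).
  { intros t n Ht Hn. destruct Hsg as [E|E]; subst sg.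
    + rewrite Rmult_1_l. unfold Phi. replace (1 / (t + IZR n)^2) with (/ (t + IZR n)^2) by (field; auto).
      apply n2_Gs_decay; auto.
    + unfold Phi. replace (1 / (t + IZR n)^2) with (/ (-1 * t + IZR (-n))^2).
      apply n2_Gs_decay; rewrite opp_IZR. replace (-1 * t + - IZR n) with (- (t + IZR n)) by ring.
      rewrite Rabs_Ropp; auto. lra.
      rewrite opp_IZR. replace (-1 * t + - IZR n) with (- (t + IZR n)) by ring. field. auto. }
  specialize (H H1 Hsep H2 ltac:(lra) H4 H5 z).
  replace (20 * INR N ^ 2) with (4 * INR (2 * N) ^ 2 + 4 * 1 / (/ INR N) ^ 2). exact H.
  rewrite mult_INR. simpl (INR 2). field. lra.
Qed.

Definition Bp (t : nat) : Cx := clsum I (fun i => Cmul (b i) (ee ((INR t - INR N) * y i))).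

Lemma dual_bound :
  lsum (seq 0 N) (fun u => n2 (clsum I (fun i => Cmul (b i) (ee (INR u * y i)))))
  <= 20 * INR N * lsum I (fun i => n2 (b i)).
Proof.
  assert (HNp : 0 < INR N) by (apply lt_0_INR; lia).
  set (K := (2 * N)%nat).
  assert (Ha : INR N * lsum (seq 0 N) (fun u => n2 (clsum I (fun i => Cmul (b i) (ee (INR u * y i)))))
             <= lsum (seq 0 K) (fun i => lsum (seq 0 K) (fun j => n2 (Bp (i + j))))).
  { assert (E : lsum (seq 0 N) (fun u => n2 (clsum I (fun i => Cmul (b i) (ee (INR u * y i)))))
              = lsum (seq 0 N) (fun u => n2 (Bp (u + N)))).
    { apply lsum_ext; intros u _. unfold Bp. f_equal. apply clsum_ext; intros. rewrite plus_INR.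
      f_equal. f_equal. ring. }
    rewrite E. replace (INR N * lsum (seq 0 N) (fun u => n2 (Bp (u + N))))
      with (lsum (seq 0 N) (fun i => lsum (seq 0 N) (fun u => n2 (Bp (u + N))))).
    2: { rewrite lsum_const, length_seq; auto. }
    unfold K. replace (2 * N)%nat with (N + N)%nat at 1 by lia. rewrite seq_split, lsum_app.
    assert (0 <= lsum (seq N N) (fun i => lsum (seq 0 (2 * N)) (fun j => n2 (Bp (i + j))))).
    { apply lsum_nonneg; intros; apply lsum_nonneg; intros; apply n2_nonneg. }
    assert (lsum (seq 0 N) (fun _ => lsum (seq 0 N) (fun u => n2 (Bp (u + N))))
            <= lsum (seq 0 N) (fun i => lsum (seq 0 (2 * N)) (fun j => n2 (Bp (i + j))))).
    { apply lsum_le; intros i Hi. apply in_seq in Hi. apply (shift_window (fun t => n2 (Bp t))). intros; apply n2_nonneg. lia. }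
    lra. }
  assert (Hb : lsum (seq 0 K) (fun i => lsum (seq 0 K) (fun j => n2 (Bp (i + j))))
             <= lsum I (fun r => lsum I (fun s => Cnorm (b r) * Phi (y r - y s) * Cnorm (b s)))).
  { assert (E1 : forall t, n2 (Bp t) = lsum I (fun r => lsum I (fun s =>
          dot (Cmul (b r) (ee ((INR t - INR N) * (y r - y s)))) (b s)))).
    { intros t. unfold Bp. rewrite n2_clsum. apply lsum_ext; intros r _. apply lsum_ext; intros s _.
      rewrite dot_rot2. f_equal. f_equal. f_equal. ring. }
    rewrite (lsum_ext _ _ (fun i => lsum (seq 0 K) (fun j => lsum I (fun r => lsum I (fun s =>
          dot (Cmul (b r) (ee ((INR (i + j) - INR N) * (y r - y s)))) (b s)))))).
    2: { intros; apply lsum_ext; intros; apply E1. }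
    rewrite (lsum_ext _ _ (fun i => lsum I (fun r => lsum I (fun s => lsum (seq 0 K) (fun j =>
          dot (Cmul (b r) (ee ((INR (i + j) - INR N) * (y r - y s)))) (b s)))))).
    2: { intros; rewrite lsum_swap. apply lsum_ext; intros; apply lsum_swap. }
    rewrite lsum_swap. apply lsum_le; intros r _. rewrite lsum_swap. apply lsum_le; intros s _.
    rewrite (lsum_ext _ _ (fun i => dot (clsum (seq 0 K) (fun j => Cmul (b r) (ee ((INR (i + j) - INR N) * (y r - y s))))) (b s))).
    2: { intros; rewrite dot_clsum_l; auto. }
    rewrite <- dot_clsum_l. eapply Rle_trans. apply dot_le. apply Rmult_le_compat_r. apply Cnorm_nonneg.
    rewrite (clsum_ext _ _ (fun i => Cmul (b r) (clsum (seq 0 K) (fun j => ee ((INR (i + j) - INR N) * (y r - y s)))))).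
    2: { intros; rewrite Cmul_clsum_l; auto. }
    rewrite <- Cmul_clsum_l, Cnorm_mul. apply Rmult_le_compat_l. apply Cnorm_nonneg.
    rewrite double_geo, Cnorm_mul, Cnorm_ee, Cnorm_mul. unfold Phi. rewrite <- Cnorm_sq. fold K. simpl. lra. }
  assert (Hc : lsum I (fun r => lsum I (fun s => Cnorm (b r) * Phi (y r - y s) * Cnorm (b s)))
               <= 20 * INR N ^ 2 * lsum I (fun i => n2 (b i))).
  { apply Rle_trans with (lsum I (fun r => lsum I (fun s => / 2 * (n2 (b r) * Phi (y r - y s)) + / 2 * (n2 (b s) * Phi (y r - y s))))).
    { apply lsum_le; intros r _; apply lsum_le; intros s _.
      rewrite <- !Cnorm_sq. pose proof (n2_nonneg (Gs (2*N) (y r - y s))). fold (Phi (y r - y s)) in H.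
      assert (0 <= (Cnorm (b r) - Cnorm (b s))^2) by apply pow2_ge_0. nra. }
    rewrite (lsum_ext _ _ (fun r => / 2 * (n2 (b r) * lsum I (fun s => Phi (-1 * (y s - y r))))
                                   + / 2 * lsum I (fun s => n2 (b s) * Phi (y r - y s)))).
    2: { intros r _. rewrite lsum_plus, !lsum_scal.
         rewrite (lsum_ext _ (fun s => Phi (y r - y s)) (fun s => Phi (-1 * (y s - y r)))); [reflexivity|].
         intros; f_equal; ring. }
    rewrite lsum_plus, lsum_scal, lsum_scal, (lsum_swap I I).
    rewrite (lsum_ext _ (fun s => lsum I (fun r => n2 (b s) * Phi (y r - y s))) (fun s => n2 (b s) * lsum I (fun r => Phi (1 * (y r - y s))))).
    2: { intros; rewrite <- lsum_scal; apply lsum_ext; intros; f_equal; f_equal; ring. }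
    assert (H : forall s, n2 (b s) * lsum I (fun r => Phi (1 * (y r - y s))) <= 20 * INR N ^ 2 * n2 (b s)).
    { intros s. pose proof (Phi_count (y s) 1 (or_introl eq_refl)). pose proof (n2_nonneg (b s)). nra. }
    assert (H0 : forall r, n2 (b r) * lsum I (fun s => Phi (-1 * (y s - y r))) <= 20 * INR N ^ 2 * n2 (b r)).
    { intros r. pose proof (Phi_count (y r) (-1) (or_intror eq_refl)). pose proof (n2_nonneg (b r)). nra. }
    pose proof (lsum_le I _ _ (fun i _ => H i)). pose proof (lsum_le I _ _ (fun i _ => H0 i)).
    rewrite lsum_scal in H1, H2. lra. }
  apply (Rmult_le_reg_l (INR N)); auto.
  replace (INR N * (20 * INR N * lsum I (fun i => n2 (b i)))) with (20 * INR N ^ 2 * lsum I (fun i => n2 (b i))) by ring.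
  lra.
Qed.
End Dual.
End LS.

Section LS2.
Variables (A : Type) (I : list A) (N : nat).
Hypothesis HN : NoDup I.
Hypothesis HN1 : (1 <= N)%nat.
Variables (x : A -> R) (a : nat -> Cx).
Hypothesis Hsep : forall i j, In i I -> In j I -> i <> j -> forall n : Z, / INR N <= Rabs (x i - x j + IZR n).

Lemma dot_rot_move z w t : dot (Cmul z (ee t)) w = dot z (Cmul w (ee (- t))).
Proof. rewrite <- (dot_rot z (Cmul w (ee (-t))) t). f_equal. rewrite Cmul_assoc, <- ee_add.
  replace (-t + t) with 0 by ring. rewrite ee_0. destruct w; unfold Cmul; simpl; f_equal; ring. Qed.

Lemma large_sieve :
  lsum I (fun i => n2 (clsum (seq 0 N) (fun u => Cmul (a u) (ee (INR u * x i)))))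
  <= 20 * INR N * lsum (seq 0 N) (fun u => n2 (a u)).
Proof.
  set (T := fun i => clsum (seq 0 N) (fun u => Cmul (a u) (ee (INR u * x i)))).
  change (lsum I (fun i => n2 (T i)) <= 20 * INR N * lsum (seq 0 N) (fun u => n2 (a u))).
  set (X := lsum I (fun i => n2 (T i))).
  set (al := lsum (seq 0 N) (fun u => n2 (a u))).
  set (Bu := fun u : nat => clsum I (fun i => Cmul (T i) (ee (INR u * (- x i))))).
  assert (HX : X = lsum (seq 0 N) (fun u => dot (a u) (Bu u))).
  { unfold X. rewrite (lsum_ext _ _ (fun i => lsum (seq 0 N) (fun u => dot (Cmul (a u) (ee (INR u * x i))) (T i)))).
    2: { intros i _. rewrite <- dot_self. unfold T at 1. rewrite dot_clsum_l. auto. }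
    rewrite lsum_swap. apply lsum_ext; intros u _. unfold Bu. rewrite dot_clsum_r. apply lsum_ext; intros i _.
    rewrite dot_rot_move. f_equal. f_equal. f_equal. ring. }
  assert (HB : lsum (seq 0 N) (fun u => n2 (Bu u)) <= 20 * INR N * X).
  { unfold Bu, X. apply (dual_bound A I N HN HN1 (fun i => - x i) T).
    intros i j Hi Hj Hne n. replace (- x i - - x j + IZR n) with (x j - x i + IZR n) by ring.
    apply Hsep; auto. }
  assert (H1 : X <= sqrt al * sqrt (20 * INR N * X)).
  { rewrite HX at 1. eapply Rle_trans. apply lsum_le. intros u _. apply dot_le.
    eapply Rle_trans. apply lsum_CS_sqrt. apply Rmult_le_compat. apply sqrt_pos. apply sqrt_pos.
    right; f_equal; apply lsum_ext; intros; apply Cnorm_sq.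
    apply sqrt_le_1_alt. rewrite (lsum_ext _ _ (fun u => n2 (Bu u))); auto. intros; apply Cnorm_sq. }
  assert (HX0 : 0 <= X) by (apply lsum_nonneg; intros; apply n2_nonneg).
  assert (Hal : 0 <= al) by (apply lsum_nonneg; intros; apply n2_nonneg).
  assert (HNp : 0 < INR N) by (apply lt_0_INR; lia).
  destruct (Req_dec X 0) as [E|E]. rewrite E. nra.
  assert (X ^ 2 <= al * (20 * INR N * X)).
  { rewrite <- (sqrt_sqrt al) by auto. rewrite <- (sqrt_sqrt (20 * INR N * X)) by nra.
    assert (0 <= sqrt al * sqrt (20 * INR N * X)) by (apply Rmult_le_pos; apply sqrt_pos).
    nra. }
  nra.
Qed.
End LS2.

Lemma lsum_single {A} (l : list A) (f : A -> R) w : NoDup l -> In w l ->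
  (forall w', In w' l -> w' <> w -> f w' = 0) -> lsum l f = f w.
Proof.
  induction l as [|a l IH]; intros HN Hin H. destruct Hin.
  inversion HN; subst. rewrite lsum_cons. destruct Hin as [E|Hin].
  - subst a. rewrite lsum_zero. ring. intros x Hx. apply H. right; auto. intro; subst; auto.
  - rewrite IH; auto. rewrite H. ring. left; auto. intro; subst; auto.
    intros; apply H; auto. right; auto.
Qed.

Lemma Gs_zero_freq H : Gs H 0 = (INR H, 0).
Proof. unfold Gs. apply Cx_ext; rewrite ?clsum_fst, ?clsum_snd; cbn [fst snd].
  - rewrite (lsum_ext _ _ (fun _ => 1)). rewrite lsum_const, length_seq. ring.
    intros; rewrite Rmult_0_r, ee_0; auto.
  - apply lsum_zero; intros; rewrite Rmult_0_r, ee_0; auto. Qed.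

Lemma Gs_vanish H w w' : (w < H)%nat -> (w' < H)%nat -> w <> w' ->
  Gs H ((INR w' - INR w) / INR H) = Cx0.
Proof.
  intros Hw Hw' Hne. set (t := (INR w' - INR w) / INR H).
  assert (HHp : 0 < INR H) by (apply lt_0_INR; lia).
  pose proof (geo H t).
  assert (E1 : ee (INR H * t) = (1, 0)).
  { unfold t. replace (INR H * ((INR w' - INR w) / INR H)) with (0 + IZR (Z.of_nat w' - Z.of_nat w)).
    rewrite ee_int, ee_0; auto. rewrite minus_IZR, <- !INR_IZR_INZ. field. lra. }
  rewrite E1 in H0. replace (Cadd (1, 0) m1) with Cx0 in H0 by (unfold Cadd, m1, Cx0; simpl; f_equal; ring).
  apply (f_equal n2) in H0. rewrite n2_mul in H0.
  assert (n2 (Cx0) = 0) by (unfold n2, Cx0; simpl; ring). rewrite H1 in H0.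
  pose proof (zround_spec t).
  set (n := (- zround t)%Z).
  assert (Hn : Rabs (t + IZR n) <= 1/2) by (unfold n; rewrite opp_IZR; apply Rabs_le; lra).
  assert (Hnz : t + IZR n <> 0).
  { intro E. assert (Eq : INR w' - INR w = - IZR n * INR H).
    { replace (INR w' - INR w) with (t * INR H) by (unfold t; field; lra). replace t with (- IZR n) by lra. auto. }
    assert (Hlt : Rabs (INR w' - INR w) < INR H).
    { apply lt_INR in Hw. apply lt_INR in Hw'. pose proof (pos_INR w). pose proof (pos_INR w'). apply Rabs_def1; lra. }
    rewrite Eq, Rabs_mult, Rabs_Ropp, (Rabs_right (INR H)) in Hlt by lra.
    assert (Hn1 : Rabs (IZR n) < 1) by (apply (Rmult_lt_reg_r (INR H)); lra).
    assert (Hn0 : n = 0%Z) by (apply one_IZR_lt1; apply Rabs_def2 in Hn1; lra).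
    rewrite Hn0 in Eq. simpl in Eq. assert (Ew : INR w' = INR w) by lra. apply INR_eq in Ew. auto. }
  pose proof (n2_eem1_lb _ Hn). rewrite <- (ee_int t n) in H0.
  assert (0 < (t + IZR n)^2) by (simpl; rewrite Rmult_1_r; apply Rsqr_pos_lt; auto).
  assert (n2 (Gs H t) = 0) by (pose proof (n2_nonneg (Gs H t)); nra).
  apply n2_zero; auto.
Qed.

Lemma parseval (H : nat) (g : nat -> Cx) : (1 <= H)%nat -> (forall w, n2 (g w) <= 1) ->
  lsum (seq 0 H) (fun h => n2 (Cscale (/ INR H)
      (clsum (seq 0 H) (fun w => Cmul (g w) (ee (- (INR h * INR w) / INR H)))))) <= 1.
Proof.
  intros HH Hg. assert (HHp : 0 < INR H) by (apply lt_0_INR; lia).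
  rewrite (lsum_ext _ _ (fun h => (/ INR H)^2 * lsum (seq 0 H) (fun w => lsum (seq 0 H) (fun w' =>
      dot (Cmul (g w) (ee (INR h * ((INR w' - INR w) / INR H)))) (g w'))))).
  2: { intros h _. rewrite n2_scale, n2_clsum. f_equal. apply lsum_ext; intros w _. apply lsum_ext; intros w' _.
       rewrite dot_rot2. f_equal. f_equal. f_equal. field. lra. }
  rewrite lsum_scal, lsum_swap.
  rewrite (lsum_ext _ _ (fun w => lsum (seq 0 H) (fun w' => dot (Cmul (g w) (Gs H ((INR w' - INR w) / INR H))) (g w')))).
  2: { intros w _. rewrite lsum_swap. apply lsum_ext; intros w' _. unfold Gs.
       rewrite Cmul_clsum_l, dot_clsum_l. apply lsum_ext; intros. f_equal. }
  rewrite (lsum_ext _ _ (fun w => INR H * n2 (g w))).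
  2: { intros w Hw. rewrite (lsum_single _ _ w). 
       - replace ((INR w - INR w) / INR H) with 0 by (field; lra). rewrite Gs_zero_freq. destruct (g w); unfold dot, n2, Cmul; simpl; ring.
       - apply seq_NoDup.
       - auto.
       - intros w' Hw' Hne. apply in_seq in Hw, Hw'. rewrite Gs_vanish by lia.
         destruct (g w), (g w'); unfold dot, Cmul, Cx0; simpl; ring. }
  rewrite lsum_scal. assert (lsum (seq 0 H) (fun w => n2 (g w)) <= INR H).
  { eapply Rle_trans. apply lsum_le. intros; apply Hg. rewrite lsum_const, length_seq. lra. }
  assert (0 <= lsum (seq 0 H) (fun w => n2 (g w))) by (apply lsum_nonneg; intros; apply n2_nonneg).
  replace ((/ INR H) ^ 2 * (INR H * lsum (seq 0 H) (fun w => n2 (g w)))) with (lsum (seq 0 H) (fun w => n2 (g w)) / INR H) by (field; lra).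
  apply (Rmult_le_reg_r (INR H)); auto. unfold Rdiv. rewrite Rmult_assoc, Rinv_l; lra.
Qed.

Lemma INR_ge1 m : 0 < INR m -> 1 <= INR m.
Proof. destruct m. simpl; lra. rewrite S_INR; pose proof (pos_INR m); lra. Qed.

Lemma telescope (a : R) n : 0 < a ->
  lsum (seq 0 n) (fun m => if Rle_dec a (INR m) then / INR m - / (INR m + 1) else 0)
  <= / a - / Rmax (INR n) a.
Proof.
  intros Ha. induction n.
  - unfold lsum; simpl. rewrite Rmax_right by lra. lra.
  - rewrite seq_S, lsum_app, lsum_cons, lsum_nil. rewrite Nat.add_0_l.
    rewrite S_INR. destruct (Rle_dec a (INR n)).
    + rewrite Rmax_left in IHn by lra. rewrite Rmax_left by lra. lra.
    + assert (Rmax (INR n) a = a) by (apply Rmax_right; lra). rewrite H in IHn.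
      assert (/ Rmax (INR n + 1) a <= / a). { apply Rinv_le_contravar; auto. apply Rmax_r. } lra.
Qed.

Lemma harmonic (b qq : R) n : 0 < b -> 1 <= qq ->
  lsum (seq 0 n) (fun m => if Rle_dec (b / qq) (INR m) then if Rlt_dec (INR m) b then / INR m else 0 else 0)
  <= qq + 1.
Proof.
  intros Hb Hq. set (a := Rmax (b / qq) 1).
  assert (Ha : 1 <= a) by apply Rmax_r.
  assert (Hbq : 0 < b / qq) by (unfold Rdiv; apply Rmult_lt_0_compat; [lra| apply Rinv_0_lt_compat; lra]).
  apply Rle_trans with ((b + 1) * lsum (seq 0 n) (fun m => if Rle_dec a (INR m) then / INR m - / (INR m + 1) else 0)).
  { rewrite <- lsum_scal. apply lsum_le; intros m _.
    destruct (Rle_dec (b / qq) (INR m)); [|destruct (Rle_dec a (INR m)); [ |lra];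
       assert (0 < INR m) by lra; assert (/ (INR m + 1) <= / INR m) by (apply Rinv_le_contravar; lra); nra].
    assert (H1 : 1 <= INR m) by (apply INR_ge1; lra).
    assert (Hma : a <= INR m) by (unfold a; apply Rmax_lub; lra).
    destruct (Rle_dec a (INR m)); [|lra].
    destruct (Rlt_dec (INR m) b).
    + replace (/ INR m - / (INR m + 1)) with (/ (INR m * (INR m + 1))) by (field; lra).
      rewrite Rinv_mult. assert (0 < / (INR m + 1)) by (apply Rinv_0_lt_compat; lra).
      assert (E : / INR m = (INR m + 1) * (/ INR m * / (INR m + 1))) by (field; lra).
      assert (0 < / INR m * / (INR m + 1)) by (apply Rmult_lt_0_compat; auto; apply Rinv_0_lt_compat; lra).
      rewrite E at 1. apply Rmult_le_compat_r; lra.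
    + assert (/ (INR m + 1) <= / INR m) by (apply Rinv_le_contravar; lra). nra. }
  eapply Rle_trans. apply Rmult_le_compat_l. lra. apply telescope. lra.
  assert (0 < / Rmax (INR n) a) by (apply Rinv_0_lt_compat; eapply Rlt_le_trans; [|apply Rmax_r]; lra).
  apply Rle_trans with ((b+1) * / a). nra.
  unfold a. destruct (Rle_dec (b/qq) 1).
  - rewrite Rmax_right by auto. assert (b <= qq). { apply (Rmult_le_reg_r (/ qq)). apply Rinv_0_lt_compat; lra. unfold Rdiv in r. rewrite Rinv_r; lra. } lra.
  - rewrite Rmax_left by lra. replace ((b + 1) * / (b / qq)) with (qq + qq / b) by (field; lra).
    assert (qq / b <= 1). { assert (qq < b). { apply (Rmult_lt_reg_r (/ qq)). apply Rinv_0_lt_compat; lra. rewrite Rinv_r; lra. }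
      unfold Rdiv. apply (Rmult_le_reg_r b); auto. rewrite Rmult_assoc, Rinv_l; lra. } lra.
Qed.

Lemma NoDup_map_pair (m : nat) (l : list nat) : NoDup l -> NoDup (map (fun k => (m, k)) l).
Proof. induction l; simpl; intros H; constructor; inversion H; subst; auto.
  intro Hin. apply in_map_iff in Hin. destruct Hin as [k [E Hk]]. injection E; intros; subst; auto. Qed.

Lemma NoDup_idx (c : nat -> bool) (P : nat -> nat -> bool) l : NoDup l ->
  NoDup (flat_map (fun m => if c m then map (fun k => (m, k)) (filter (P m) (seq 0 m)) else nil) l).
Proof.
  induction l as [|a l IH]; simpl; intros H. constructor. inversion H; subst.
  apply NoDup_app; auto.
  - destruct (c a). apply NoDup_map_pair, NoDup_filter, seq_NoDup. constructor.
  - intros p Hp Hp'. destruct (c a); [|destruct Hp]. apply in_map_iff in Hp. destruct Hp as [k [E _]]. subst p.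
    apply in_flat_map in Hp'. destruct Hp' as [m [Hm Hp']]. destruct (c m); [|destruct Hp'].
    apply in_map_iff in Hp'. destruct Hp' as [k' [E _]]. injection E; intros; subst. auto.
Qed.

Lemma z_nonzero (m k m' k' : nat) (n : Z) : (k < m)%nat -> (k' < m')%nat ->
  Nat.gcd k m = 1%nat -> Nat.gcd k' m' = 1%nat -> (m, k) <> (m', k') ->
  (Z.of_nat k * Z.of_nat m' - Z.of_nat k' * Z.of_nat m + n * Z.of_nat m * Z.of_nat m')%Z <> 0%Z.
Proof.
  intros H1 H2 G1 G2 Hne Hz.
  assert (Hn : n = 0%Z).
  { destruct (Z.eq_dec n 0); auto. exfalso.
    assert (A1 : (Z.of_nat k * Z.of_nat m' < Z.of_nat m * Z.of_nat m')%Z) by nia.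
    assert (A2 : (Z.of_nat k' * Z.of_nat m < Z.of_nat m * Z.of_nat m')%Z) by nia.
    assert (A3 : (0 <= Z.of_nat k * Z.of_nat m')%Z) by nia.
    assert (A4 : (0 <= Z.of_nat k' * Z.of_nat m)%Z) by nia.
    destruct (Z_lt_le_dec n 0).
    - assert (n * Z.of_nat m * Z.of_nat m' <= - (Z.of_nat m * Z.of_nat m'))%Z by nia. lia.
    - assert (n * Z.of_nat m * Z.of_nat m' >= (Z.of_nat m * Z.of_nat m'))%Z by nia. lia. }
  subst n. assert (E : (k * m' = k' * m)%nat) by lia.
  assert (D1 : Nat.divide m m').
  { apply (Nat.gauss m k m'). exists k'. lia. rewrite Nat.gcd_comm; auto. }
  assert (D2 : Nat.divide m' m).
  { apply (Nat.gauss m' k' m). exists k. lia. rewrite Nat.gcd_comm; auto. }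
  assert (m = m') by (apply Nat.divide_antisym; auto). subst m'.
  assert (k = k') by nia. subst. auto.
Qed.

Lemma inv_INR_nonneg m : 0 <= / INR m.
Proof. destruct (Req_dec (INR m) 0) as [E|E]. rewrite E, Rinv_0; lra. apply Rlt_le, Rinv_0_lt_compat. pose proof (pos_INR m); lra. Qed.

Lemma pow_pos_nat q n : (2 <= q)%nat -> (1 <= q ^ n)%nat.
Proof. intros. induction n; simpl; nia. Qed.

Section Main.
Variables (q : nat) (P : nat -> nat) (alpha : R) (mu nu d M : Z) (kappa rho1 l : nat) (theta : R).
Hypothesis Hq : (2 <= q)%nat.
Hypothesis Hd : (1 <= d)%Z.
Hypothesis HM : powerRZ (INR q) (mu - 1) <= IZR M < powerRZ (INR q) mu.
Hypothesis HMd : powerRZ (INR q) (Z.of_nat kappa - 1) < (IZR M) ^ 2 / (IZR d) ^ 2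
      <= powerRZ (INR q) (Z.of_nat kappa).

Let N := (q ^ kappa)%nat.
Let H := (q ^ rho1)%nat.
Let Pw := powerRZ (INR q) (mu + nu).
Let b := IZR M / IZR d.
Let c u h := cfun q P alpha kappa rho1 l u h.
Let xx (p : nat * nat) := INR (snd p) / INR (fst p) - theta / Pw.
Let cond (m : nat) : bool := if Rle_dec (IZR M / (INR q * IZR d)) (INR m) then if Rlt_dec (INR m) (IZR M / IZR d) then true else false else false.
Let Pg (m k : nat) : bool := Nat.eqb (Nat.gcd k m) 1.
Let I := flat_map (fun m => if cond m then map (fun k => (m, k)) (filter (Pg m) (seq 0 m)) else nil) (seq 0 (Z.to_nat M)).
Let Sh h p := clsum (seq 0 N) (fun u => Cmul (c u h) (ee (INR u * xx p))).

Lemma qR_ge2 : 2 <= INR q. Proof. apply (le_INR 2); auto. Qed.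
Lemma M_pos : 0 < IZR M. Proof. pose proof (powerRZ_lt (INR q) (mu - 1)). pose proof qR_ge2. lra. Qed.
Lemma d_ge1 : 1 <= IZR d. Proof. apply (IZR_le 1); auto. Qed.
Lemma b_pos : 0 < b. Proof. pose proof M_pos; pose proof d_ge1. unfold b, Rdiv. apply Rmult_lt_0_compat; auto. apply Rinv_0_lt_compat; lra. Qed.
Lemma INR_N : INR N = INR q ^ kappa. Proof. unfold N; apply pow_INR. Qed.
Lemma b2_le_N : b ^ 2 <= INR N.
Proof. rewrite INR_N, (pow_powerRZ (INR q) kappa). destruct HMd as [_ X]. unfold b. pose proof d_ge1.
  assert (E : (IZR M / IZR d)^2 = IZR M ^ 2 / IZR d ^ 2) by (field; lra). rewrite E. exact X. Qed.

Lemma cond_true m : cond m = true -> IZR M / (INR q * IZR d) <= INR m /\ INR m < b.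
Proof. unfold cond. destruct (Rle_dec (IZR M / (INR q * IZR d)) (INR m)); destruct (Rlt_dec (INR m) (IZR M / IZR d)); intros E; try discriminate; auto. Qed.

Lemma cond_pos m : cond m = true -> 1 <= INR m.
Proof. intros E. apply cond_true in E. destruct E as [E _]. apply INR_ge1. eapply Rlt_le_trans; eauto.
  pose proof M_pos. pose proof d_ge1. pose proof qR_ge2. unfold Rdiv. apply Rmult_lt_0_compat; auto.
  apply Rinv_0_lt_compat; nra. Qed.

Lemma In_I m k : In (m, k) I -> cond m = true /\ (k < m)%nat /\ Nat.gcd k m = 1%nat.
Proof.
  unfold I. intros Hin. apply in_flat_map in Hin. destruct Hin as [m0 [_ Hin]].
  destruct (cond m0) eqn:E; [|destruct Hin]. apply in_map_iff in Hin. destruct Hin as [k0 [Ek Hk]].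
  injection Ek; intros; subst. apply filter_In in Hk. destruct Hk as [Hk Hg]. apply in_seq in Hk.
  unfold Pg in Hg. apply Nat.eqb_eq in Hg. repeat split; auto; lia.
Qed.


Lemma Pw_pos : 0 < Pw. Proof. unfold Pw. apply powerRZ_lt. pose proof qR_ge2; lra. Qed.

Lemma Ssum_repr : Ssum q P alpha mu nu M d kappa rho1 l theta
  = lsum (seq 0 H) (fun h => lsum I (fun p => / INR (fst p) * Cnorm (Sh h p))).
Proof.
  unfold Ssum. rewrite rsum_lsum. apply lsum_ext; intros h _. rewrite rsum_lsum.
  unfold I. rewrite lsum_flat_map. apply lsum_ext; intros m _.
  destruct (cond m) eqn:Ec.
  - pose proof (cond_pos m Ec) as Hm. unfold cond in Ec.
    destruct (Rle_dec (IZR M / (INR q * IZR d)) (INR m)); [|discriminate].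
    destruct (Rlt_dec (INR m) (IZR M / IZR d)); [|discriminate].
    rewrite lsum_map, lsum_filter, rsum_lsum, <- lsum_scal. apply lsum_ext; intros k _.
    unfold Pg. destruct (Nat.gcd k m =? 1); [|simpl; ring]. simpl fst.
    f_equal. f_equal. unfold Sh. rewrite csum_clsum. apply clsum_ext; intros u _. f_equal.
    f_equal. unfold xx; simpl. pose proof Pw_pos. unfold Pw in *. field. lra.
  - unfold cond in Ec.
    destruct (Rle_dec (IZR M / (INR q * IZR d)) (INR m)); [|reflexivity].
    destruct (Rlt_dec (INR m) (IZR M / IZR d)); [discriminate|reflexivity].
Qed.


Lemma NoDup_I : NoDup I.
Proof. apply NoDup_idx, seq_NoDup. Qed.

Lemma N_ge1 : (1 <= N)%nat. Proof. apply pow_pos_nat; auto. Qed.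

Lemma sepI : forall i j, In i I -> In j I -> i <> j -> forall n : Z, / INR N <= Rabs (xx i - xx j + IZR n).
Proof.
  intros [m k] [m' k'] Hi Hj Hne n.
  destruct (In_I _ _ Hi) as [C1 [K1 G1]]. destruct (In_I _ _ Hj) as [C2 [K2 G2]].
  pose proof (cond_pos _ C1) as P1. pose proof (cond_pos _ C2) as P2.
  destruct (cond_true _ C1) as [_ B1]. destruct (cond_true _ C2) as [_ B2].
  set (z := (Z.of_nat k * Z.of_nat m' - Z.of_nat k' * Z.of_nat m + n * Z.of_nat m * Z.of_nat m')%Z).
  assert (E : xx (m, k) - xx (m', k') + IZR n = IZR z / (INR m * INR m')).
  { unfold z, xx; simpl. rewrite plus_IZR, minus_IZR, !mult_IZR, <- !INR_IZR_INZ. pose proof Pw_pos. field. repeat split; lra. }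
  rewrite E. pose proof (z_nonzero m k m' k' n K1 K2 G1 G2 Hne) as Hz. fold z in Hz.
  assert (Hz1 : 1 <= Rabs (IZR z)). { rewrite <- abs_IZR. apply (IZR_le 1). lia. }
  pose proof b2_le_N. pose proof b_pos.
  assert (Hmm0 : INR m * INR m' <= b * b) by (apply Rmult_le_compat; lra).
  assert (Hmm : INR m * INR m' <= INR N) by (simpl in *; lra).
  unfold Rdiv. rewrite Rabs_mult, (Rabs_right (/ (INR m * INR m'))) by (apply Rle_ge, Rlt_le, Rinv_0_lt_compat; nra).
  assert (/ INR N <= / (INR m * INR m')) by (apply Rinv_le_contravar; nra).
  assert (0 < / (INR m * INR m')) by (apply Rinv_0_lt_compat; nra). nra.
Qed.

Lemma W_bound : lsum I (fun p => (/ INR (fst p)) ^ 2) <= INR q + 1.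
Proof.
  unfold I. rewrite lsum_flat_map.
  apply Rle_trans with (lsum (seq 0 (Z.to_nat M)) (fun m => if Rle_dec (b / INR q) (INR m) then if Rlt_dec (INR m) b then / INR m else 0 else 0)).
  2: { apply harmonic. apply b_pos. pose proof qR_ge2; lra. }
  apply lsum_le; intros m _. destruct (cond m) eqn:Ec.
  - pose proof (cond_pos m Ec). destruct (cond_true m Ec) as [L1 L2].
    assert (b / INR q <= INR m). { unfold b. replace (IZR M / IZR d / INR q) with (IZR M / (INR q * IZR d)); auto.
      pose proof d_ge1. pose proof qR_ge2. field. lra. }
    destruct (Rle_dec (b / INR q) (INR m)); [|lra]. destruct (Rlt_dec (INR m) b); [|lra].
    rewrite lsum_map, lsum_filter. simpl fst.
    apply Rle_trans with (lsum (seq 0 m) (fun _ => (/ INR m) ^ 2)).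
    { apply lsum_le; intros k _. destruct (Pg m k). lra. apply pow2_ge_0. }
    rewrite lsum_const, length_seq. right. field. lra.
  - unfold lsum at 1; simpl. destruct Rle_dec; [destruct Rlt_dec|]; try lra. apply inv_INR_nonneg.
Qed.

Lemma inner_bound h : lsum I (fun p => / INR (fst p) * Cnorm (Sh h p))
  <= sqrt (INR q + 1) * sqrt (20 * INR N * lsum (seq 0 N) (fun u => n2 (c u h))).
Proof.
  eapply Rle_trans. apply lsum_CS_sqrt. apply Rmult_le_compat. apply sqrt_pos. apply sqrt_pos.
  apply sqrt_le_1_alt. apply W_bound.
  apply sqrt_le_1_alt. rewrite (lsum_ext _ _ (fun p => n2 (Sh h p))) by (intros; apply Cnorm_sq).
  unfold Sh. apply (large_sieve (nat * nat) I N NoDup_I N_ge1 xx (fun u => c u h) sepI).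
Qed.


Lemma parseval_c u : lsum (seq 0 H) (fun h => n2 (c u h)) <= 1.
Proof.
  unfold c, cfun, H. cbv zeta.
  apply (parseval (q ^ rho1) (fun w => Cmul (fPrho q P alpha (kappa + rho1) (u + w * q ^ kappa + q ^ (kappa + rho1) * (q ^ l / q ^ rho1)))
      (Cconj (fPrho q P alpha (kappa + rho1) (w * q ^ kappa + q ^ (kappa + rho1) * (q ^ l / q ^ rho1)))))).
  apply pow_pos_nat; auto.
  intros w. rewrite n2_mul, n2_conj. unfold fPrho, fP. rewrite !n2_ee. lra.
Qed.

Lemma Ssum_bound : Ssum q P alpha mu nu M d kappa rho1 l theta
  <= sqrt (20 * (INR q + 1)) * INR N * sqrt (INR H).
Proof.
  rewrite Ssum_repr.
  set (X := fun h => lsum (seq 0 N) (fun u => n2 (c u h))).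
  apply Rle_trans with (lsum (seq 0 H) (fun h => sqrt (INR q + 1) * sqrt (20 * INR N) * (1 * sqrt (X h)))).
  { apply lsum_le; intros h _. eapply Rle_trans. apply inner_bound. right.
    rewrite Rmult_1_l. unfold X. rewrite (sqrt_mult (20 * INR N)). ring.
    pose proof (pos_INR N); lra. unfold X; apply lsum_nonneg; intros; apply n2_nonneg. }
  rewrite lsum_scal.
  assert (HX : lsum (seq 0 H) X <= INR N).
  { unfold X. rewrite lsum_swap. eapply Rle_trans. apply lsum_le. intros u _. apply parseval_c.
    rewrite lsum_const, length_seq. lra. }
  eapply Rle_trans. apply Rmult_le_compat_l. apply Rmult_le_pos; apply sqrt_pos. apply lsum_CS_sqrt.
  rewrite (lsum_ext _ (fun _ => 1 ^ 2) (fun _ => 1)) by (intros; ring).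
  rewrite (lsum_ext _ (fun h => sqrt (X h) ^ 2) X).
  2: { intros; simpl; rewrite Rmult_1_r, sqrt_sqrt; auto. unfold X; apply lsum_nonneg; intros; apply n2_nonneg. }
  rewrite lsum_const, length_seq, Rmult_1_r.
  assert (sqrt (lsum (seq 0 H) X) <= sqrt (INR N)) by (apply sqrt_le_1_alt; auto).
  assert (HN0 : 0 <= INR N) by apply pos_INR.
  assert (Hq1 : 0 <= INR q + 1) by (pose proof (pos_INR q); lra).
  assert (E1 : sqrt (INR q + 1) * sqrt (20 * INR N) = sqrt (20 * (INR q + 1)) * sqrt (INR N)).
  { rewrite <- !sqrt_mult by lra. f_equal; ring. }
  assert (E2 : sqrt (INR N) * sqrt (INR N) = INR N) by (apply sqrt_sqrt; auto).
  assert (Eq : sqrt (20 * (INR q + 1)) * INR N * sqrt (INR H) =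
     sqrt (INR q + 1) * sqrt (20 * INR N) * (sqrt (INR H) * sqrt (INR N))).
  { rewrite E1, <- E2 at 1. ring. }
  rewrite Eq.
  apply Rmult_le_compat_l. apply Rmult_le_pos; apply sqrt_pos.
  apply Rmult_le_compat_l. apply sqrt_pos. auto.
Qed.

Lemma Ssum_nonneg : 0 <= Ssum q P alpha mu nu M d kappa rho1 l theta.
Proof. rewrite Ssum_repr. apply lsum_nonneg; intros; apply lsum_nonneg; intros.
  apply Rmult_le_pos. apply inv_INR_nonneg. apply Cnorm_nonneg. Qed.

End Main.

Theorem mainTheorem2 :
  forall q : nat, (2 <= q)%nat ->
  exists C : R,
  forall (P : nat -> nat), (forall a b : nat, (a <= b)%nat -> (P a <= P b)%nat) ->
  forall (alpha : R) (mu nu d M : Z) (kappa rho1 l : nat) (theta : R),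
    (1 <= d)%Z ->
    powerRZ (INR q) (mu - 1) <= IZR M < powerRZ (INR q) mu ->
    (1 <= kappa)%nat -> INR kappa <= 2 / 3 * IZR (mu + nu) ->
    powerRZ (INR q) (Z.of_nat kappa - 1) < (IZR M) ^ 2 / (IZR d) ^ 2
      <= powerRZ (INR q) (Z.of_nat kappa) ->
    (Z.of_nat rho1 <= mu + nu - Z.of_nat kappa)%Z ->
    Rabs (Ssum q P alpha mu nu M d kappa rho1 l theta)
      <= C * ln (INR q) * Rpower (INR q) (INR rho1 / 2 + INR kappa).
Proof.
  intros q Hq. exists (sqrt (20 * (INR q + 1)) / ln (INR q)).
  intros P HP alpha mu nu d M kappa rho1 l theta Hd HM Hk Hk2 HMd Hr.
  pose proof (Ssum_bound q P alpha mu nu d M kappa rho1 l theta Hq Hd HM HMd) as B.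
  pose proof (Ssum_nonneg q P alpha mu nu d M kappa rho1 l theta Hq Hd HM) as Nn.
  rewrite Rabs_right by lra.
  assert (Hq2 : 2 <= INR q) by (apply (le_INR 2); auto).
  assert (Hln : 0 < ln (INR q)) by (rewrite <- ln_1; apply ln_increasing; lra).
  replace (sqrt (20 * (INR q + 1)) / ln (INR q) * ln (INR q)) with (sqrt (20 * (INR q + 1))) by (field; lra).
  rewrite Rpower_plus, Rpower_pow by lra.
  replace (INR rho1 / 2) with (INR rho1 * / 2) by (unfold Rdiv; auto).
  rewrite <- Rpower_mult, Rpower_sqrt, Rpower_pow by (try lra; unfold Rpower; apply exp_pos).
  rewrite !pow_INR in B. lra.
Qed.
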